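(* For every $n\ge1$ and $s\ge 2$, the homomorphism $\nu_n^s:A_n^s\to A_{n+1}^s$ is injective.
   Context: For $s\ge1$, $A_n^s$ is the group of path components of the space of homotopy self-equivalences of a connected graph $G\simeq\bigvee^nS^1$ fixing $s$ chosen distinct marked points $x_1,\dots,x_s$ pointwise; $A_n^s\cong\mathrm{Aut}(F_n)\ltimes F_n^{\times(s-1)}$ with $\mathrm{Aut}(F_n)$ acting diagonally. The homomorphism $\alpha_n^s:A_n^s\to A_{n+1}^{s-1}$ (for $s\ge2$) is induced by connecting the last marked point $x_s$ to the first marked point $x_1$ by a new edge (which raises the rank to $n+1 $ and leaves $s-1$ marked points), extending self-equivalences by the identity on the new edge. The homomorphism $\mu_{n}^{s}:A_{n}^{s}\to A_{n}^{s+1}$ is induced by attaching a new edge (leg) at a marked point, with its free endpoint as a new marked point, extending by the identity on the leg; under $A_n^s\cong\mathrm{Aut}(F_n)\ltimes F_n^{\times(s-1)}$ it is the standard inclusion $\mathrm{Aut}(F_n)\ltimes F_n^{\times(s-1)}\hookrightarrow\mathrm{Aut}(F_n)\ltimes F_n^{\times s}$. Finally $\nu_n^s:=\mu_{n+1}^{s-1}\circ\alpha_n^s$. *)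

(* Defs.v *)
From HB Require Import structures.
From mathcomp Require Import all_boot.
Set Implicit Arguments. Unset Strict Implicit. Unset Printing Implicit Defensive.

(* A letter of F_n: a generator index and an "inverse" flag. *)
Definition letter (n : nat) := ('I_n * bool)%type.

Definition cancels n (x y : letter n) : bool := (x.1 == y.1) && (x.2 != y.2).
Definition ncancels n : rel (letter n) := fun x y => ~~ cancels x y.

Definition reducedw n (w : seq (letter n)) : bool := sorted (@ncancels n) w.

Definition rstep n (x : letter n) (acc : seq (letter n)) : seq (letter n) :=
  if acc is y :: r then (if cancels x y then r else x :: acc) else [:: x].
Definition reduce n (w : seq (letter n)) : seq (letter n) := foldr (@rstep n) [::] w.

Lemma reduce_reduced n (w : seq (letter n)) : reducedw (reduce w).
Proof.
rewrite /reducedw; elim: w => [//|x w IH] /=.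
rewrite /rstep; case: (reduce w) IH => [//|y r] /= H.
case: ifP => Hc; first by case: r H => //= z r /andP [].
by rewrite /= {1}/ncancels Hc.
Qed.

Record FreeGroup (n : nat) := FG { fgval : seq (letter n); fgP : reducedw fgval }.
HB.instance Definition _ n := [isSub for @fgval n].
HB.instance Definition _ n := [Equality of FreeGroup n by <:].

Definition fg_mul n (u v : FreeGroup n) : FreeGroup n :=
  FG (reduce_reduced (fgval u ++ fgval v)).
Definition fg_one n : FreeGroup n := FG (reduce_reduced [::]).
Definition fg_inv n (u : FreeGroup n) : FreeGroup n :=
  FG (reduce_reduced (rev (map (fun x : letter n => (x.1, ~~ x.2)) (fgval u)))).
Definition fg_gen n (i : 'I_n) : FreeGroup n := FG (reduce_reduced [:: (i, false)]).

Definition is_hom n m (f : FreeGroup n -> FreeGroup m) : Prop :=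
  forall u v, f (fg_mul u v) = fg_mul (f u) (f v).
Definition is_aut n (f : FreeGroup n -> FreeGroup n) : Prop :=
  is_hom f /\ bijective f.

Definition hom_ext n m (img : 'I_n -> FreeGroup m) (w : FreeGroup n) : FreeGroup m :=
  foldr (fun (l : letter n) acc =>
           fg_mul (if l.2 then fg_inv (img l.1) else img l.1) acc)
        (fg_one m) (fgval w).

Definition fg_incl n : FreeGroup n -> FreeGroup n.+1 :=
  hom_ext (fun i : 'I_n => fg_gen (lift ord_max i)).

(* Elements of A_n^s = Aut(F_n) |x F_n^(s-1) are pairs (phi, g) with phi an
   automorphism of F_n and g = [:: g_2; ...; g_s] a list of size s-1.
   Group law: (phi, g) (psi, h) = (phi \o psi, [seq g_i * phi h_i]). *)
Definition A_carrier n s (phi : FreeGroup n -> FreeGroup n) (g : seq (FreeGroup n)) : Prop :=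
  is_aut phi /\ size g = s.-1.

Definition A_mul n (a b : (FreeGroup n -> FreeGroup n) * seq (FreeGroup n)) :=
  (a.1 \o b.1, [seq fg_mul gh.1 (a.1 gh.2) | gh <- zip a.2 b.2]).

(* alpha_n^s : A_n^s -> A_(n+1)^(s-1): the new generator t = x_n (index n),
   the loop formed by the fixed path x_1 ~> x_s followed by the new edge;
   phi' restricts to phi on F_n and sends t to g_s^{-1} t; the coordinates
   g_2..g_(s-1) are kept. *)
Definition alpha_aut n (phi : FreeGroup n -> FreeGroup n) (gs : FreeGroup n)
  : FreeGroup n.+1 -> FreeGroup n.+1 :=
  hom_ext (fun j : 'I_n.+1 =>
    match unlift ord_max j with
    | Some i => fg_incl (phi (fg_gen i))
    | None => fg_mul (fg_inv (fg_incl gs)) (fg_gen ord_max)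
    end).

Definition alpha n s (a : (FreeGroup n -> FreeGroup n) * seq (FreeGroup n))
  : (FreeGroup n.+1 -> FreeGroup n.+1) * seq (FreeGroup n.+1) :=
  (alpha_aut a.1 (last (fg_one n) a.2), map (@fg_incl n) (take (s.-2) a.2)).

Definition mu n (a : (FreeGroup n -> FreeGroup n) * seq (FreeGroup n)) :=
  (a.1, rcons a.2 (fg_one n)).

Definition nu n s (a : (FreeGroup n -> FreeGroup n) * seq (FreeGroup n)) :=
  mu (alpha s a).

(* Main.v *)
Require Import Defs.
From mathcomp Require Import all_boot.
From Stdlib Require Import FunctionalExtensionality.
Set Implicit Arguments. Unset Strict Implicit. Unset Printing Implicit Defensive.

Definition act n (u R : seq (letter n)) := foldr (@rstep n) R u.

Lemma rstep_reduced n (x : letter n) R : reducedw R -> reducedw (rstep x R).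
Proof.
rewrite /reducedw /rstep; case: R => [//|y r] /= H.
case: ifP => Hc; first by case: r H => //= z r /andP [].
by rewrite /= {1}/ncancels Hc.
Qed.

Lemma act_reduced n (u R : seq (letter n)) : reducedw R -> reducedw (act u R).
Proof. by move=> HR; elim: u => [//|x u IH] /=; apply: rstep_reduced. Qed.

Lemma reduce_id n (w : seq (letter n)) : reducedw w -> reduce w = w.
Proof.
elim: w => [//|x w IH] Hw /=.
have Hw' : reducedw w by rewrite /reducedw; apply: (path_sorted Hw).
rewrite IH //; case: w Hw {IH Hw'} => [//|y w] /= /andP [H _].
by rewrite /ncancels in H; rewrite (negbTE H).
Qed.

Lemma rstep_cancel n (x y : letter n) V : cancels x y -> reducedw V ->
  rstep x (rstep y V) = V.
Proof.
move=> Cxy; case: V => [|z V] /=.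
  by move=> _; rewrite /rstep Cxy.
case: ifP => Cyz HV; last by rewrite /rstep Cxy.
have xz : x = z.
  move: Cxy Cyz {HV}; case: x => a b; case: y => c d; case: z => e f.
  rewrite /cancels /= => /andP [/eqP -> H1] /andP [/eqP -> H2].
  by move: H1 H2; case: b; case: d; case: f.
subst z; case: V HV => [//|w V] /= /andP [H _].
by rewrite /ncancels in H; rewrite (negbTE H).
Qed.

Lemma reduce_cat n (A B : seq (letter n)) : reduce (A ++ B) = act A (reduce B).
Proof. by rewrite /reduce /act foldr_cat. Qed.

Lemma act_rstep n (x : letter n) W R : reducedw R ->
  rstep x (act W R) = act (rstep x W) R.
Proof.
move=> HR; case: W => [//|y W] /=.
case: ifP => // C; rewrite rstep_cancel //; exact: act_reduced.
Qed.

Lemma act_reduce n (X R : seq (letter n)) : reducedw R -> act (reduce X) R = act X R.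
Proof.
move=> HR; elim: X => [//|x X IH] /=.
by rewrite -IH -act_rstep.
Qed.

Lemma reduce_catl n (X Y : seq (letter n)) : reduce (reduce X ++ Y) = reduce (X ++ Y).
Proof. by rewrite !reduce_cat act_reduce //; apply: reduce_reduced. Qed.

Lemma reduce_catr n (X Y : seq (letter n)) : reduce (X ++ reduce Y) = reduce (X ++ Y).
Proof. by rewrite !reduce_cat reduce_id //; apply: reduce_reduced. Qed.

Lemma reduce_inv n (u : seq (letter n)) :
  reduce (rev (map (fun x : letter n => (x.1, ~~ x.2)) u) ++ u) = [::].
Proof.
elim: u => [//|x u IH] /=.
rewrite rev_cons -cats1 -catA reduce_cat /= rstep_cancel.
- by rewrite -reduce_cat.
- by rewrite /cancels /= eqxx; case: (x.2).
- exact: reduce_reduced.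
Qed.

Section G.
Variable n : nat.
Local Notation "a * b" := (@fg_mul n a b).
Local Notation one := (fg_one n).

Lemma mulA (u v w : FreeGroup n) : (u * v) * w = u * (v * w).
Proof. by apply: val_inj; rewrite /= reduce_catl reduce_catr catA. Qed.
Lemma mul1 (u : FreeGroup n) : one * u = u.
Proof. by apply: val_inj; rewrite /= reduce_id //; apply: fgP. Qed.
Lemma mul1r (u : FreeGroup n) : u * one = u.
Proof. by apply: val_inj; rewrite /= cats0 reduce_id //; apply: fgP. Qed.
Lemma mulV (u : FreeGroup n) : fg_inv u * u = one.
Proof. by apply: val_inj; rewrite /= reduce_catl reduce_inv. Qed.
Lemma mulKg (a y : FreeGroup n) : fg_inv a * (a * y) = y.
Proof. by rewrite -mulA mulV mul1. Qed.
Lemma mulgV (a : FreeGroup n) : a * fg_inv a = one.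
Proof.
rewrite -[LHS]mul1 -(mulV (fg_inv a)) mulA -(mulA (fg_inv a) a) mulV mul1 mulV //.
Qed.
Lemma mulgK (y a : FreeGroup n) : (y * a) * fg_inv a = y.
Proof. by rewrite mulA mulgV mul1r. Qed.
Lemma cancl (a y z : FreeGroup n) : a * y = a * z -> y = z.
Proof. by move=> H; rewrite -(mulKg a y) H mulKg. Qed.
Lemma cancr (a y z : FreeGroup n) : y * a = z * a -> y = z.
Proof. by move=> H; rewrite -(mulgK y a) H mulgK. Qed.
Lemma inv_inj (y z : FreeGroup n) : fg_inv y = fg_inv z -> y = z.
Proof.
move=> H; apply: (@cancr (fg_inv y)); rewrite mulgV H mulgV //.
Qed.
End G.

Definition lett n (x : letter n) : FreeGroup n :=
  if x.2 then fg_inv (fg_gen x.1) else fg_gen x.1.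

Lemma lettE n (x : letter n) : fgval (lett x) = [:: x].
Proof. by case: x => j []. Qed.

Lemma FG_cons n (x : letter n) w (Hw : reducedw (x :: w)) (Hw' : reducedw w) :
  FG Hw = fg_mul (lett x) (FG Hw').
Proof.
apply: val_inj; rewrite /= lettE /= reduce_id //.
case: w Hw {Hw'} => [//|y w] /= /andP [H _].
by rewrite /ncancels in H; rewrite (negbTE H).
Qed.

Lemma hom_ext_gen n m (img : 'I_n -> FreeGroup m) i : hom_ext img (fg_gen i) = img i.
Proof. by rewrite /hom_ext /= mul1r. Qed.

Lemma fg_incl_val n (w : FreeGroup n) :
  fgval (fg_incl w) = map (fun l : letter n => (lift ord_max l.1, l.2)) (fgval w).
Proof.
case: w => w Hw; rewrite /fg_incl /hom_ext /=.
elim: w Hw => [//|x w IH] Hw /=.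
have Hw' : reducedw w by rewrite /reducedw; apply: (path_sorted Hw).
have -> : (if x.2 then fg_inv (fg_gen (lift ord_max x.1)) else fg_gen (lift ord_max x.1))
   = lett ((lift ord_max x.1, x.2) : letter n.+1) by [].
rewrite lettE /= -(IH Hw').
set R := foldr _ _ w.
rewrite reduce_id; last by apply: fgP.
rewrite (IH Hw').
case: w Hw {Hw' IH R} => [//|y w] /= /andP [H _].
rewrite /ncancels in H; rewrite /cancels /= (inj_eq (lift_inj (h:=ord_max))).
by move: H; rewrite /cancels => /negbTE ->.
Qed.

Lemma fg_incl_inj n : injective (@fg_incl n).
Proof.
move=> u v H; apply: val_inj; move: (congr1 (@fgval _) H); rewrite !fg_incl_val.
apply: inj_map; case=> a b; case=> c d [E ->]; congr (_, _); apply: (@lift_inj _ ord_max); exact: val_inj.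
Qed.

Lemma hom_agree n (i0 : 'I_n) (phi psi : FreeGroup n -> FreeGroup n) :
  is_hom phi -> is_hom psi -> (forall i, phi (fg_gen i) = psi (fg_gen i)) ->
  forall u, phi u = psi u.
Proof.
move=> Hp Hq Hg.
have E1 : phi (fg_one n) = psi (fg_one n).
  apply: (@cancl _ (phi (fg_gen i0))).
  rewrite -Hp mul1r {2}Hg -Hq mul1r Hg //.
have Ei : forall i, phi (fg_inv (fg_gen i)) = psi (fg_inv (fg_gen i)).
  move=> i; apply: (@cancl _ (phi (fg_gen i))).
  by rewrite -Hp mulgV E1 Hg -Hq mulgV.
have El : forall x, phi (lett x) = psi (lett x).
  by move=> [j []]; rewrite /lett /=.
case=> w; elim: w => [|x w IH] Hw.
  have -> : FG Hw = fg_one n by apply: val_inj.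
  exact: E1.
have Hw' : reducedw w by rewrite /reducedw; apply: (path_sorted Hw).
by rewrite (FG_cons Hw Hw') Hp Hq El IH.
Qed.

Theorem mainTheorem8 (n s : nat) : 1 <= n -> 2 <= s ->
  forall (phi psi : FreeGroup n -> FreeGroup n) (g h : seq (FreeGroup n)),
    A_carrier s phi g -> A_carrier s psi h ->
    nu s (phi, g) = nu s (psi, h) -> (phi, g) = (psi, h).
Proof.
move=> n1 s2 phi psi g h [[Hp _] Sg] [[Hq _] Sh].
rewrite /nu /mu /alpha /= => -[Ea /rcons_inj [Et]].
have Eg : take s.-2 g = take s.-2 h by apply: (inj_map (@fg_incl_inj n)).
have Egs : last (fg_one n) g = last (fg_one n) h.
  have := congr1 (fun f => f (fg_gen ord_max)) Ea; rewrite /= /alpha_aut !hom_ext_gen.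
  rewrite unlift_none => /cancr /inv_inj /fg_incl_inj //.
have Elast : forall l : seq (FreeGroup n), size l = s.-1 ->
    l = rcons (take s.-2 l) (last (fg_one n) l).
  move=> l; case/lastP: l => [|l x].
    by case: (s) s2 => [|[|k]].
  rewrite size_rcons last_rcons => Sl.
  by rewrite -Sl /= -cats1 take_size_cat // cats1.
have Gh : g = h by rewrite (Elast g Sg) (Elast h Sh) Eg Egs.
subst h; congr (_, _).
apply: functional_extensionality; apply: (hom_agree (Ordinal n1) Hp Hq) => i.
have := congr1 (fun f => f (fg_gen (lift ord_max i))) Ea; rewrite /= /alpha_aut !hom_ext_gen.
by rewrite liftK => /fg_incl_inj.
Qed.
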